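(* Let $k\ge1$ and let $\mu_k$ be an LTI probability measure on $X_k=\{0,1\}^{\{0,\ldots,k\}}$. Suppose there is a bijection $\phi:X_k\to X_k$ with $\mu_k(\phi(\eta))=\mu_k(\eta)$ for all $\eta$ and $\phi(\{0\xi,1\xi\})=\{\xi0,\xi1\}$ for every binary string $\xi$ of length $k$. Then $\mu_k$ has a translation invariant extension $\mu$ to $\{0,1\}^{\mathbb{Z}}$ with total entropy $S(\mu)=S(\mu_k)$; consequently $\mu$ has minimal total entropy among all translation invariant extensions of $\mu_k$. Explicitly, if $P_1,\ldots,P_n$ are the orbits of $\phi$, each viewed as a closed path in the de Bruijn graph $G_k$ with edges $\eta,\phi(\eta),\phi^2(\eta),\ldots$, and $w_i$ is the common value of $\mu_k$ on the edges of $P_i$, then $\mu=\sum_{i=1}^n w_i|P_i|\,\nu_{P_i}$.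
   Context: Total entropy $S(\mu)=\lim_{j\to\infty}S(\pi_j\mu)$, with $\pi_j\mu$ the marginal on coordinates $0,\ldots,j$ and $S$ the Gibbs–Shannon entropy. De Bruijn graph $G_k$: vertices binary strings of length $k$, edges binary strings of length $k+1$, edge $a\theta b$ from $a\theta$ to $\theta b$. For a closed path $P$ with edges $\eta^{(1)},\ldots,\eta^{(p)}$ that is not a repetition of a shorter closed path, $\nu_P$ gives mass $1/p$ to each of the $p$ translates of the periodic configuration obtained by traversing $P$ repeatedly and recording the first symbol of each edge. LTI: for $A,A'\subset\{0,\ldots,k\}$ with $A'$ a translate of $A$, the marginals on $A'$ and $A$ agree up to translation. *)

(* Defs.v *)
From HB Require Import structures.
From mathcomp Require Import all_boot all_order all_fingroup.
From Stdlib Require Import Reals.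

Set Implicit Arguments.
Unset Strict Implicit.
Unset Printing Implicit Defensive.

Notation "\rsum_ ( i : T ) F" := (\big[Rplus/0%R]_(i : T) F)
  (at level 41, F at level 41, i, T at level 50).

(* X_k = {0,1}^{0..k} : binary words of length k+1 (false = 0, true = 1). *)
Notation Xk k := ((k.+1).-tuple bool).

Definition prob_Xk (k : nat) (muk : Xk k -> R) : Prop :=
  (forall x, (0 <= muk x)%R) /\ \big[Rplus/0%R]_(x : Xk k) muk x = 1%R.

Definition marg (k : nat) (muk : Xk k -> R) (A : seq nat) (a : nat -> bool) : R :=
  \big[Rplus/0%R]_(x : Xk k | all (fun i => nth false x i == a i) A) muk x.

Definition LTI (k : nat) (muk : Xk k -> R) : Prop :=
  forall (A : seq nat) (t : nat) (a : nat -> bool),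
    all (fun i => i + t <= k) A ->
    marg muk A a = marg muk [seq i + t | i <- A] (fun j => a (j - t)).

(* A translation invariant probability measure on {0,1}^Z, represented (via
   the Kolmogorov extension theorem) by its cylinder masses:
   mu w = mu{ x : x_0 .. x_{n-1} = w } (= mass of w at any position). *)
Definition ti_measure (mu : seq bool -> R) : Prop :=
  mu [::] = 1%R /\
  (forall w, (0 <= mu w)%R) /\
  (forall w, mu w = (mu (rcons w false) + mu (rcons w true))%R) /\
  (forall w, mu w = (mu (false :: w) + mu (true :: w))%R).

Definition extends (k : nat) (mu : seq bool -> R) (muk : Xk k -> R) : Prop :=
  forall x : Xk k, mu (val x) = muk x.

Definition plogp (p : R) : R := if Rle_dec p 0 then 0%R else (p * ln p)%R.

Definition entropy_Xk (k : nat) (muk : Xk k -> R) : R :=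
  (- \big[Rplus/0%R]_(x : Xk k) plogp (muk x))%R.

Definition marg_entropy (mu : seq bool -> R) (j : nat) : R :=
  (- \big[Rplus/0%R]_(w : (j.+1).-tuple bool) plogp (mu (val w)))%R.

Definition total_entropy_is (mu : seq bool -> R) (L : R) : Prop :=
  Un_cv (marg_entropy mu) L.

Definition deBruijn_compatible (k : nat) (phi : {perm Xk k}) : Prop :=
  forall xi : k.-tuple bool,
    phi @: [set [tuple of false :: xi]; [tuple of true :: xi]] =
    [set [tuple of rcons xi false]; [tuple of rcons xi true]].

Definition default_Xk (k : nat) : Xk k := [tuple of nseq k.+1 false].

Definition orbit_start (k : nat) (P : {set Xk k}) : Xk k :=
  odflt (default_Xk k) [pick x in P].

(* nu_P for the closed path P = (eta, phi eta, phi^2 eta, ...) of length p = |P|: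
   the periodic configuration records the first symbol of each edge,
   x_t = first symbol of phi^t(eta); nu_P gives mass 1/p to each of its p
   translates, so nu_P(cylinder w at 0..n-1) = (1/p) #{t < p : x_{t+m} = w_m, m < n}. *)
Definition nu_orbit (k : nat) (phi : {perm Xk k}) (P : {set Xk k}) (w : seq bool) : R :=
  let eta := orbit_start P in
  (/ INR #|P| *
   INR #|[set t : 'I_#|P| |
          all (fun m => tnth (iter (t + m) phi eta) ord0 == nth false w m)
              (iota 0 (size w))]|)%R.

(* mu = sum_i w_i |P_i| nu_{P_i}, over the orbits P_i of phi, with w_i the
   (common) value of mu_k on the edges of P_i. *)
Definition orbit_measure (k : nat) (muk : Xk k -> R) (phi : {perm Xk k})
  (w : seq bool) : R :=
  \big[Rplus/0%R]_(P in porbits phi)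
     (muk (orbit_start P) * INR #|P| * nu_orbit phi P w)%R.

(* Main.v *)
Require Import Defs.
From HB Require Import structures.
From mathcomp Require Import all_boot all_order all_fingroup.
From Stdlib Require Import Reals Lra.
Set Implicit Arguments.
Unset Strict Implicit.
Unset Printing Implicit Defensive.

HB.instance Definition _ := Monoid.isComLaw.Build R 0%R Rplus (fun x y z => esym (Rplus_assoc x y z)) Rplus_comm Rplus_0_l.

Section S.
Variables (k : nat) (phi : {perm Xk k}).
Hypothesis hdb : deBruijn_compatible phi.

Lemma phi_shift (y : Xk k) i : i < k -> nth false (phi y) i = nth false y i.+1.
Proof.
move=> ik.
have [b ->] : exists b, y = [tuple of b :: behead_tuple y].
  exists (thead y); apply: val_inj => /=.
  by case: y => -[|a s] //= _.
have := hdb (behead_tuple y).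
set xi := behead_tuple y => E.
have : phi [tuple of b :: xi] \in [set [tuple of rcons xi false]; [tuple of rcons xi true]].
  by rewrite -E; apply: imset_f; case: b; rewrite !inE eqxx ?orbT.
rewrite !inE => /orP[] /eqP -> /=; rewrite nth_rcons size_tuple ik //.
Qed.

Lemma iter_phi_nth (y : Xk k) m i : i + m <= k ->
  nth false (iter m phi y) i = nth false y (i + m).
Proof.
elim: m y i => [|m IH] y i h; first by rewrite addn0.
rewrite addnS in h.
rewrite iterSr IH; last exact: ltnW.
by rewrite phi_shift // addnS.
Qed.

Definition fw (w : seq bool) (y : Xk k) : bool :=
  all (fun m => tnth (iter m phi y) ord0 == nth false w m) (iota 0 (size w)).

Lemma INR_sum (I : finType) (P : pred I) (F : I -> nat) :
  INR (\sum_(i | P i) F i) = \big[Rplus/0%R]_(i | P i) INR (F i).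
Proof. by apply: (big_morph INR) => // x y; rewrite plus_INR. Qed.

Lemma INR_card (A : {set Xk k}) : INR #|A| = \big[Rplus/0%R]_(y in A) 1%R.
Proof. by rewrite -sum1_card INR_sum. Qed.

Lemma Rmult_sum (I : finType) (P : pred I) (F : I -> R) c :
  (c * \big[Rplus/0%R]_(i | P i) F i = \big[Rplus/0%R]_(i | P i) (c * F i))%R.
Proof.
by apply: (big_morph (fun x => c * x)%R) => [x y|]; rewrite ?Rmult_plus_distr_l ?Rmult_0_r.
Qed.

Lemma count_orbit (eta : Xk k) (g : pred (Xk k)) :
  #|[set t : 'I_#|porbit phi eta| | g (iter t phi eta)]| =
  #|[set y in porbit phi eta | g y]|.
Proof.
set n := #|porbit phi eta|.
pose h (t : 'I_n) := iter t phi eta.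
have hinj : injective h.
  move=> a b; rewrite /h -!(nth_traject _ (ltn_ord _)) => /eqP.
  rewrite nth_uniq ?size_traject ?ltn_ord ?uniq_traject_porbit //.
  by move=> /eqP; apply: val_inj.
suff <- : h @: [set t | g (h t)] = [set y in porbit phi eta | g y].
  by rewrite card_imset.
apply/setP => y; rewrite inE; apply/imsetP/andP.
  case=> t; rewrite inE => gt ->; split => //.
  by rewrite porbit_traject; apply/trajectP; exists t.
case=> yP gy; move: yP; rewrite porbit_traject => /trajectP[i ilt yE].
by exists (Ordinal ilt); rewrite ?inE /h /= -yE.
Qed.

Lemma muk_orbit (muk : Xk k -> R) (hinv : forall eta, muk (phi eta) = muk eta)
  eta y : y \in porbit phi eta -> muk y = muk eta.
Proof.
move=> /porbitP[i ->]; rewrite permX.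
by elim: i => //= i IH; rewrite hinv.
Qed.

Lemma mu_eq (muk : Xk k -> R) (hinv : forall eta, muk (phi eta) = muk eta) w :
  orbit_measure muk phi w = \big[Rplus/0%R]_(y | fw w y) muk y.
Proof.
rewrite (partition_big (porbit phi) (mem (porbits phi))); last first.
  by move=> y _; apply: imset_f.
apply: eq_bigr => P /imsetP[x _ ->].
have [eta etaP etaE] : exists2 eta, eta \in porbit phi x & orbit_start (porbit phi x) = eta.
  rewrite /orbit_start; case: pickP => [z zP|]; first by exists z.
  by move=> /(_ x); rewrite porbit_id.
have Pe : porbit phi x = porbit phi eta.
  by apply/eqP; rewrite eq_porbit_mem porbit_sym.
rewrite /nu_orbit etaE Pe.
have -> : [set t : 'I_#|porbit phi eta| |
          all (fun m => tnth (iter (t + m) phi eta) ord0 == nth false w m)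
              (iota 0 (size w))] = [set t : 'I_#|porbit phi eta| | fw w (iter t phi eta)].
  apply/setP => t; rewrite !inE /fw; apply: eq_all => m.
  by rewrite addnC iterD.
rewrite count_orbit.
have n0 : INR #|porbit phi eta| <> 0%R.
  by apply: not_0_INR; apply/eqP; apply: card_porbit_neq0.
rewrite -Rmult_assoc (Rmult_assoc _ _ (/ _)) Rinv_r // Rmult_1_r INR_card Rmult_sum.
apply: eq_big => [y | y]; first by rewrite inE eq_porbit_mem andbC.
rewrite inE.
move=> /andP[yP _].
by rewrite Rmult_1_r (muk_orbit hinv yP).
Qed.


Definition win (n : nat) (y : Xk k) : seq bool :=
  mkseq (fun m => tnth (iter m phi y) ord0) n.

Lemma fw_win w y : fw w y = (win (size w) y == w).
Proof.
rewrite /fw /win; apply/idP/eqP.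
  move=> /allP H; apply: (@eq_from_nth _ false); rewrite size_mkseq // => i ilt.
  by rewrite nth_mkseq //; apply/eqP; apply: H; rewrite mem_iota.
move=> <-; apply/allP => m; rewrite mem_iota size_mkseq add0n => mlt.
by rewrite nth_mkseq.
Qed.

Lemma tnth_iter y m : m <= k -> tnth (iter m phi y) ord0 = nth false y m.
Proof. by move=> mk; rewrite (tnth_nth false) iter_phi_nth. Qed.

Lemma win_val y : win k.+1 y = val y.
Proof.
apply: (@eq_from_nth _ false); rewrite size_mkseq ?size_tuple // => i ilt.
by rewrite nth_mkseq // tnth_iter.
Qed.

Lemma fw_val (x y : Xk k) : fw (val x) y = (y == x).
Proof. by rewrite fw_win size_tuple win_val. Qed.

Lemma fw_rcons w b y :
  fw (rcons w b) y = fw w y && (tnth (iter (size w) phi y) ord0 == b).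
Proof.
by rewrite !fw_win size_rcons /win mkseqS eqseq_rcons.
Qed.

Lemma win_S n y : win n.+1 y = tnth y ord0 :: win n (phi y).
Proof.
have E : iota 0 n.+1 = 0 :: map (addn 1) (iota 0 n) by rewrite -iotaDl.
rewrite /win /mkseq E /= -map_comp.
by congr (_ :: _); apply: eq_map => m /=; rewrite add0n -iterS iterSr.
Qed.

Lemma fw_cons w b y : fw (b :: w) y = (tnth y ord0 == b) && fw w (phi y).
Proof. by rewrite !fw_win /= win_S eqseq_cons. Qed.

Lemma fw_nil y : fw [::] y.
Proof. by []. Qed.

Lemma win_inj n : k < n -> injective (win n).
Proof.
move=> kn y z E; apply: val_inj; apply: (@eq_from_nth _ false); rewrite ?size_tuple //.
move=> i ilt.
have ilt' : i < n by apply: leq_trans kn.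
have H : forall u, nth false (win n u) i = nth false u i.
  by move=> u; rewrite /win nth_mkseq // tnth_iter.
by rewrite -!H E.
Qed.

End S.

Lemma Rle_sum (I : finType) (P : pred I) (F G : I -> R) :
  (forall i, P i -> (F i <= G i)%R) ->
  (\big[Rplus/0%R]_(i | P i) F i <= \big[Rplus/0%R]_(i | P i) G i)%R.
Proof.
move=> H; apply: (big_ind2 (fun x y => (x <= y)%R)) => //.
- exact: Rle_refl.
- by move=> *; apply: Rplus_le_compat.
Qed.

Lemma sum_ge0 (I : finType) (P : pred I) (F : I -> R) :
  (forall i, P i -> (0 <= F i)%R) -> (0 <= \big[Rplus/0%R]_(i | P i) F i)%R.
Proof.
move=> H; apply: (big_ind (fun x => (0 <= x)%R)) => //.
- exact: Rle_refl.
- by move=> *; apply: Rplus_le_le_0_compat.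
Qed.

Lemma plogp0 : plogp 0 = 0%R.
Proof. by rewrite /plogp; case: Rle_dec => // h; exfalso; apply: h; apply: Rle_refl. Qed.

Lemma plogp_super a b : (0 <= a)%R -> (0 <= b)%R ->
  (plogp a + plogp b <= plogp (a + b))%R.
Proof.
move=> ha hb.
destruct (Rle_lt_or_eq_dec _ _ ha) as [ha'|ea]; last first.
  by rewrite -ea; rewrite plogp0 Rplus_0_l Rplus_0_l; apply: Rle_refl.
destruct (Rle_lt_or_eq_dec _ _ hb) as [hb'|eb]; last first.
  by rewrite -eb; rewrite plogp0 Rplus_0_r Rplus_0_r; apply: Rle_refl.
rewrite /plogp; destruct (Rle_dec a 0); first lra.
destruct (Rle_dec b 0); first lra.
destruct (Rle_dec (a+b) 0); first lra.
have h1 : (ln a <= ln (a + b))%R by apply: Rlt_le; apply: ln_increasing; lra.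
have h2 : (ln b <= ln (a + b))%R by apply: Rlt_le; apply: ln_increasing; lra.
have h3 := Rmult_le_compat_l _ _ _ ha h1.
have h4 := Rmult_le_compat_l _ _ _ hb h2.
rewrite Rmult_plus_distr_r /=; lra.
Qed.

Lemma marg_entropy_mono (nu : seq bool -> R) : ti_measure nu ->
  forall j, (marg_entropy nu j <= marg_entropy nu j.+1)%R.
Proof.
move=> [_ [nu0 [_ nucons]]] j.
rewrite /marg_entropy; apply: Ropp_le_contravar.
pose h (p : (j.+1).-tuple bool * bool) : (j.+2).-tuple bool := [tuple of p.2 :: p.1].
pose g (t : (j.+2).-tuple bool) : (j.+1).-tuple bool * bool := ([tuple of behead t], thead t).
have hb : bijective h.
  exists g.
    by case=> w b; rewrite /g /h /= theadE; congr (_, _); apply: val_inj.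
  by move=> t; rewrite /g /h /=; rewrite [RHS]tuple_eta.
rewrite (reindex h (onW_bij _ hb)) /=.
rewrite -(pair_big xpredT xpredT (fun w b => plogp (nu (val (h (w, b)))))) /=.
apply: Rle_sum => w _; rewrite big_bool /= (nucons w).
rewrite Rplus_comm; apply: plogp_super; apply: nu0.
Qed.

Lemma un_lower (u : nat -> R) L k : Un_cv u L ->
  (forall n, (u n <= u n.+1)%R) -> (u k <= L)%R.
Proof.
move=> cv mono.
have mono' : forall d, (u k <= u (addn k d))%R.
  elim=> [|d IH]; first by rewrite addn0; apply: Rle_refl.
  by rewrite addnS; apply: Rle_trans (mono _).
case: (Rle_or_lt (u k) L) => // hlt; exfalso.
have [N HN] := cv (u k - L)%R ltac:(lra).
have := HN (addn k N) ltac:(apply/leP; apply: leq_addl).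
rewrite /R_dist => h.
have := Rle_abs (u (addn k N) - L)%R.
have := mono' N.
lra.
Qed.

Lemma mu_entropy k (phi : {perm Xk k}) (hdb : deBruijn_compatible phi)
  (muk : Xk k -> R) (hinv : forall eta, muk (phi eta) = muk eta) j :
  k <= j -> marg_entropy (orbit_measure muk phi) j = entropy_Xk muk.
Proof.
move=> kj; rewrite /marg_entropy /entropy_Xk; congr (- _)%R.
have szw : forall y, size (win phi j.+1 y) == j.+1 by move=> y; rewrite size_mkseq.
pose wt y : (j.+1).-tuple bool := Tuple (szw y).
have kn : k < j.+1 by rewrite ltnS.
have wtinj : injective wt.
  by move=> y z /(congr1 val) /= E; apply: (win_inj hdb kn).
rewrite [RHS](partition_big wt xpredT) //=.
apply: eq_bigr => w _.
rewrite (mu_eq hinv).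
have E : forall y, fw phi (val w) y = (wt y == w).
  by move=> y; rewrite fw_win size_tuple.
rewrite (eq_bigl _ _ E).
case: (pickP (fun y => wt y == w)) => [y0 /eqP e | none].
  have P1 : (fun y => wt y == w) =1 pred1 y0.
    by move=> y /=; rewrite -e (inj_eq wtinj).
  by rewrite (big_pred1 y0 P1) (big_pred1 y0 P1).
by rewrite !big_pred0 // plogp0.
Qed.

Unset Implicit Arguments.

Theorem mainTheorem9 (k : nat) (muk : Xk k -> R) (phi : {perm Xk k}) :
  (1 <= k)%N ->
  prob_Xk muk ->
  LTI muk ->
  (forall eta, muk (phi eta) = muk eta) ->
  deBruijn_compatible phi ->
  let mu := orbit_measure muk phi in
  ti_measure mu /\
  extends mu muk /\
  total_entropy_is mu (entropy_Xk muk) /\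
  (forall nu : seq bool -> R, ti_measure nu -> extends nu muk ->
     forall L, total_entropy_is nu L -> (entropy_Xk muk <= L)%R).
Proof.
move=> _ [muk0 muk1] _ hinv hdb mu.
have mE := mu_eq hinv.
split; [split; [|split; [|split]] | split; [|split]].
- rewrite /mu mE -[RHS]muk1; apply: eq_bigl => y; exact: fw_nil.
- by move=> w; rewrite /mu mE; apply: sum_ge0.
- move=> w; rewrite /mu !mE !(big_mkcond (fw phi _)) -big_split /=.
  apply: eq_bigr => y _; rewrite !fw_rcons.
  case: (fw phi w y) => /=; last by rewrite Rplus_0_l.
  by case: (tnth _ _); rewrite /= ?Rplus_0_l ?Rplus_0_r.
- move=> w; rewrite /mu !mE !(big_mkcond (fw phi _)) -big_split /=.
  rewrite (reindex_inj (@perm_inj _ phi)) /=.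
  apply: eq_bigr => y _; rewrite !fw_cons hinv.
  case: (fw phi w (phi y)); rewrite ?andbT ?andbF /= ?Rplus_0_l //.
  by case: (tnth y ord0); rewrite /= ?Rplus_0_l ?Rplus_0_r.
- move=> x; rewrite /mu mE (eq_bigl _ _ (fw_val hdb x)); exact: big_pred1_eq.
- move=> eps heps; exists k => n /leP kn.
  by rewrite /mu (mu_entropy hdb hinv kn) /R_dist Rminus_diag Rabs_R0.
- move=> nu tnu enu L cv.
  have -> : entropy_Xk muk = marg_entropy nu k.
    by rewrite /marg_entropy /entropy_Xk; congr (- _)%R; apply: eq_bigr => x _; rewrite enu.
  exact: (@un_lower (marg_entropy nu) L k cv (marg_entropy_mono tnu)).
Qed.
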